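(* Let $\Diamond$ be a cellular decomposition of a surface into quadrilaterals, with complex cochains $C^k(\Diamond)$ and coboundary $d$, equipped with the products described in the context. Then $d$ is a derivation for these products: for all functions $f,g\in C^0(\Diamond)$ and every 1-form $\alpha\in C^1(\Diamond)$, $d(f\cdot g)=(df)\cdot g+f\cdot dg$ and $d(f\cdot\alpha)=df\wedge\alpha+f\cdot d\alpha$.
   Context: Products on $\Diamond$: for functions, $(f\cdot g)(x)=f(x)g(x)$; for a function and a 1-form, $\int_{(x,y)}f\cdot\alpha=\frac{f(x)+f(y)}{2}\int_{(x,y)}\alpha$ on each edge; for two 1-forms, on a positively oriented face $(x_1,x_2,x_3,x_4)$ (indices mod 4), $\iint\alpha\wedge\beta=\frac14\sum_{k=1}^4\Bigl(\int_{(x_{k-1},x_k)}\alpha\int_{(x_k,x_{k+1})}\beta-\int_{(x_{k+1},x_k)}\alpha\int_{(x_k,x_{k-1})}\beta\Bigr)$; for a function and a 2-form, $\iint_{(x_1,x_2,x_3,x_4)}f\cdot\omega=\frac{f(x_1)+f(x_2)+f(x_3)+f(x_4)}{4}\iint_{(x_1,x_2,x_3,x_4)}\omega$. The coboundary is given by Stokes: $\int_{(x,y)}df=f(y)-f(x)$, $\iint_F d\alpha=\oint_{\partial F}\alpha$. *)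

(* Defs.v *)
From HB Require Import structures.
From mathcomp Require Import all_boot all_order all_algebra.
From mathcomp Require Import complex.
From mathcomp Require Import reals.
Set Implicit Arguments. Unset Strict Implicit. Unset Printing Implicit Defensive.
Import Order.TTheory GRing.Theory Num.Theory.
Local Open Scope ring_scope.

(* A cellular decomposition of a surface into quadrilaterals, described
   combinatorially: vertices, faces, and for each face its four (distinct)
   vertices x_1..x_4 listed in positive (counterclockwise) order, indices
   taken mod 4 (ordS / ord_pred on 'I_4). *)
Record quad_complex := QuadComplex {
  qvert : Type;
  qface : Type;
  qbd : qface -> 'I_4 -> qvert;
  qbd_inj : forall F, injective (qbd F)
}.

Section Cochains.
Variable (R : realType) (Q : quad_complex).
Local Notation C := (R[i]).
Local Notation V := (qvert Q).
Local Notation F := (qface Q).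
Local Notation v := (@qbd Q).

(* the edge {x,y}, seen with orientation (x,y) *)
Definition is_edge (x y : V) : Prop :=
  exists (Fc : F) (k : 'I_4),
    (v Fc k = x /\ v Fc (ordS k) = y) \/ (v Fc (ordS k) = x /\ v Fc k = y).

(* cochains: C^0 = functions on vertices, C^1 = functions on oriented edges
   (alpha x y = integral of alpha over (x,y)), C^2 = functions on faces *)
Definition C0 := V -> C.
Definition C1 := V -> V -> C.
Definition C2 := F -> C.

Definition is_1form (a : C1) : Prop :=
  forall x y, is_edge x y -> a y x = - a x y.

Definition d0 (f : C0) : C1 := fun x y => f y - f x.
Definition d1 (a : C1) : C2 :=
  fun Fc => \sum_(k < 4) a (v Fc k) (v Fc (ordS k)).

Definition mul00 (f g : C0) : C0 := fun x => f x * g x.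
Definition mul01 (f : C0) (a : C1) : C1 :=
  fun x y => (f x + f y) / 2 * a x y.
Definition wedge11 (a b : C1) : C2 :=
  fun Fc => 4^-1 * \sum_(k < 4)
     (a (v Fc (ord_pred k)) (v Fc k) * b (v Fc k) (v Fc (ordS k))
      - a (v Fc (ordS k)) (v Fc k) * b (v Fc k) (v Fc (ord_pred k))).
Definition mul02 (f : C0) (w : C2) : C2 :=
  fun Fc => (\sum_(k < 4) f (v Fc k)) / 4 * w Fc.

End Cochains.

(* Main.v *)
Require Import Defs.
From HB Require Import structures.
From mathcomp Require Import all_boot all_order all_algebra.
From mathcomp Require Import complex.
From mathcomp Require Import reals.
From mathcomp Require Import ring.
Import GRing.Theory Num.Theory.
Local Open Scope ring_scope.

Theorem mainTheorem15 (R : realType) (Q : quad_complex)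
    (f g : C0 R Q) (a : C1 R Q) (ha : is_1form a) :
  (forall x y, is_edge x y ->
     d0 (mul00 f g) x y = mul01 g (d0 f) x y + mul01 f (d0 g) x y) /\
  (forall Fc : qface Q,
     d1 (mul01 f a) Fc = wedge11 (d0 f) a Fc + mul02 f (d1 a) Fc).
Proof.
split.
  move=> x y _; rewrite /d0 /mul00 /mul01.
  have h2 : (2 : R[i]) != 0 by rewrite pnatr_eq0.
  by field.
move=> Fc.
have e1 : forall k : 'I_4, a (qbd Fc (ordS k)) (qbd Fc k) = - a (qbd Fc k) (qbd Fc (ordS k)).
  move=> k; apply: ha; exists Fc, k; by left.
set i0 : 'I_4 := @Ordinal 4 0 isT.
set i1 : 'I_4 := @Ordinal 4 1 isT.
set i2 : 'I_4 := @Ordinal 4 2 isT.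
set i3 : 'I_4 := @Ordinal 4 3 isT.
have s0 : ordS i0 = i1 by apply: val_inj.
have s1 : ordS i1 = i2 by apply: val_inj.
have s2 : ordS i2 = i3 by apply: val_inj.
have s3 : ordS i3 = i0 by apply: val_inj.
have p0 : ord_pred i0 = i3 by apply: val_inj.
have p1 : ord_pred i1 = i0 by apply: val_inj.
have p2 : ord_pred i2 = i1 by apply: val_inj.
have p3 : ord_pred i3 = i2 by apply: val_inj.
have E0 := e1 i0; have E1 := e1 i1; have E2 := e1 i2; have E3 := e1 i3.
rewrite ?s0 ?s1 ?s2 ?s3 in E0 E1 E2 E3.
rewrite /d1 /mul01 /wedge11 /mul02 /d0 !big_ord_recl !big_ord0 /=.
have -> : lift ord0 (lift ord0 (lift ord0 ord0)) = i3 :> 'I_4 by apply: val_inj.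
have -> : lift ord0 (lift ord0 ord0) = i2 :> 'I_4 by apply: val_inj.
have -> : lift ord0 ord0 = i1 :> 'I_4 by apply: val_inj.
have -> : ord0 = i0 :> 'I_4 by apply: val_inj.
rewrite ?s0 ?s1 ?s2 ?s3 ?p0 ?p1 ?p2 ?p3 E0 E1 E2 E3.
have h2 : (2 : R[i]) != 0 by rewrite pnatr_eq0.
have h4 : (4 : R[i]) != 0 by rewrite pnatr_eq0.
by field.
Qed.
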